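(* Let $\mathcal{H}$ be a complex Hilbert space and $B,C\in\mathcal{B}(\mathcal{H})$. Then $$w^2\left(\begin{bmatrix}0 & B\\ C & 0\end{bmatrix}\right)\ge \frac14\max\left\{\big\||B|^2+|C^*|^2\big\|,\ \big\||B^*|^2+|C|^2\big\|\right\}+\frac18\Big|\,\|B+C^*\|^2-\|B-C^*\|^2\,\Big|.$$
   Context: $\mathcal{B}(\mathcal{H})$ is the algebra of bounded linear operators on $\mathcal{H}$ with operator norm $\|\cdot\|$. For $A\in\mathcal{B}(\mathcal{H})$, $A^*$ is the adjoint, $|A|=(A^*A)^{1/2}$, $|A^*|=(AA^* )^{1/2}$, and $w(A)=\sup_{\|x\|=1}|\langle Ax,x\rangle|$ is the numerical radius. The operator matrix $\begin{bmatrix}A&B\\C&D\end{bmatrix}$ acts on $\mathcal{H}\oplus\mathcal{H}$ by $(x_1,x_2)\mapsto(Ax_1+Bx_2,\,Cx_1+Dx_2)$; $0$ denotes the zero operator. *)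

(* Defs.v *)
From HB Require Import structures.
From mathcomp Require Import all_boot all_order all_algebra.
From mathcomp Require Import complex.
From mathcomp Require Import classical_sets reals.
Set Implicit Arguments.
Unset Strict Implicit.
Unset Printing Implicit Defensive.
Import Order.TTheory GRing.Theory Num.Theory.
Local Open Scope ring_scope.
Local Open Scope classical_set_scope.

Definition cabs (R : realType) (z : R[i]) : R :=
  Num.sqrt (complex.Re z ^+ 2 + complex.Im z ^+ 2).

Definition is_inner_product (R : realType) (V : lmodType R[i])
    (ip : V -> V -> R[i]) : Prop :=
  [/\ (forall (a : R[i]) (x y z : V), ip (a *: x + y) z = a * ip x z + ip y z),
      (forall x y : V, ip y x = conjc (ip x y)),
      (forall x : V, complex.Im (ip x x) = 0 /\ 0 <= complex.Re (ip x x)) &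
      (forall x : V, ip x x = 0 -> x = 0)].

Definition ipnorm (R : realType) (T : Type) (ip : T -> T -> R[i]) (x : T) : R :=
  Num.sqrt (complex.Re (ip x x)).

Definition ip_complete (R : realType) (V : lmodType R[i])
    (ip : V -> V -> R[i]) : Prop :=
  forall u : nat -> V,
    (forall e : R, 0 < e -> exists N : nat, forall m n : nat,
        (N <= m)%N -> (N <= n)%N -> ipnorm ip (u m - u n) < e) ->
    exists l : V, forall e : R, 0 < e -> exists N : nat, forall n : nat,
        (N <= n)%N -> ipnorm ip (u n - l) < e.

Definition is_hilbert (R : realType) (V : lmodType R[i])
    (ip : V -> V -> R[i]) : Prop :=
  is_inner_product ip /\ ip_complete ip.

Definition bounded_op (R : realType) (V : lmodType R[i])
    (ip : V -> V -> R[i]) (A : {linear V -> V}) : Prop :=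
  exists M : R, forall x : V, ipnorm ip (A x) <= M * ipnorm ip x.

Definition is_adjoint (R : realType) (V : lmodType R[i])
    (ip : V -> V -> R[i]) (A As : V -> V) : Prop :=
  forall x y : V, ip (A x) y = ip x (As y).

Definition opnorm (R : realType) (T : Type) (ip : T -> T -> R[i])
    (A : T -> T) : R :=
  sup [set ipnorm ip (A x) | x in [set x : T | ipnorm ip x <= 1]].

Definition numrad (R : realType) (T : Type) (ip : T -> T -> R[i])
    (A : T -> T) : R :=
  sup [set cabs (ip (A x) x) | x in [set x : T | ipnorm ip x = 1]].

Definition ip_sum (R : realType) (V : Type) (ip : V -> V -> R[i])
    (x y : V * V) : R[i] :=
  ip x.1 y.1 + ip x.2 y.2.

(* the operator matrix [[A, B], [C, D]] acting on H (+) H *)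
Definition opmat (V : zmodType) (A B C D : V -> V) (x : V * V) : V * V :=
  (A x.1 + B x.2, C x.1 + D x.2).

(* Main.v *)
Require Import Defs.
From HB Require Import structures.
From mathcomp Require Import all_boot all_order all_algebra.
From mathcomp Require Import complex.
From mathcomp Require Import classical_sets reals.
From mathcomp Require Import lra ring boolp.
Set Implicit Arguments.
Unset Strict Implicit.
Import Order.TTheory GRing.Theory Num.Theory.
Local Open Scope ring_scope.
Local Open Scope complex_scope.
Local Open Scope classical_set_scope.

Section Cx.
Variable R : realType.
Implicit Types a b : R[i].
Lemma ReD a b : complex.Re (a + b) = complex.Re a + complex.Re b.
Proof. by case: a; case: b. Qed.
Lemma ImD a b : complex.Im (a + b) = complex.Im a + complex.Im b.
Proof. by case: a; case: b. Qed.
Lemma ReN a : complex.Re (- a) = - complex.Re a.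
Proof. by case: a. Qed.
Lemma ImN a : complex.Im (- a) = - complex.Im a.
Proof. by case: a. Qed.
Lemma ReB a b : complex.Re (a - b) = complex.Re a - complex.Re b.
Proof. by rewrite ReD ReN. Qed.
Lemma ReMC (k : R) a : complex.Re (k%:C * a) = k * complex.Re a.
Proof. by case: a => x y /=; rewrite mul0r subr0. Qed.
Lemma ImMC (k : R) a : complex.Im (k%:C * a) = k * complex.Im a.
Proof. by case: a => x y /=; rewrite mul0r addr0. Qed.
Lemma ReJ a : complex.Re (conjc a) = complex.Re a.
Proof. by case: a. Qed.
Lemma ImJ a : complex.Im (conjc a) = - complex.Im a.
Proof. by case: a. Qed.
Lemma Re_iM a : complex.Re ('i%C * a) = - complex.Im a.
Proof. by case: a => x y /=; rewrite !mul0r !mul1r sub0r. Qed.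
Lemma Im_iM a : complex.Im ('i%C * a) = complex.Re a.
Proof. by case: a => x y /=; rewrite !mul0r !mul1r add0r. Qed.
Lemma conj_i : conjc ('i%C : R[i]) = - 'i%C.
Proof. by rewrite /conjc /=; apply/eqP; rewrite eq_complex /= oppr0 !eqxx. Qed.
Lemma i_conj_i : ('i%C : R[i]) * conjc 'i%C = 1.
Proof. by rewrite conj_i mulrN -expr2 sqr_i opprK. Qed.
Lemma Re_le_cabs a : complex.Re a <= cabs a.
Proof.
rewrite /cabs; apply: le_trans (ler_norm _) _.
rewrite -sqrtr_sqr; apply: ler_wsqrtr; rewrite lerDl; exact: sqr_ge0.
Qed.
Lemma Im_le_cabs a : - complex.Im a <= cabs a.
Proof.
rewrite /cabs; apply: le_trans (ler_norm _) _.
rewrite -sqrtr_sqr; apply: ler_wsqrtr; rewrite sqrrN lerDr; exact: sqr_ge0.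
Qed.
Lemma cabs_ge0 a : 0 <= cabs a.
Proof. exact: sqrtr_ge0. Qed.
Lemma cabsMC (k : R) a : cabs (k%:C * a) = `|k| * cabs a.
Proof.
rewrite /cabs ReMC ImMC !exprMn -mulrDr sqrtrM ?sqr_ge0 //.
by rewrite sqrtr_sqr.
Qed.
End Cx.
Section IP.
Variable R : realType.
Variable V : lmodType R[i].
Variable ip : V -> V -> R[i].
Hypothesis hip : is_inner_product ip.

Lemma ipZDl a x y z : ip (a *: x + y) z = a * ip x z + ip y z.
Proof. by case: hip. Qed.
Lemma ipC x y : ip y x = conjc (ip x y).
Proof. by case: hip. Qed.
Lemma ipDl x y z : ip (x + y) z = ip x z + ip y z.
Proof. by rewrite -[x]scale1r ipZDl mul1r scale1r. Qed.
Lemma ip0l z : ip 0 z = 0.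
Proof.
have h := ipZDl 1 0 0 z; rewrite scale1r addr0 mul1r in h.
by have := congr1 (fun t => t - ip 0 z) h; rewrite subrr addrK.
Qed.
Lemma ipZl a x z : ip (a *: x) z = a * ip x z.
Proof. by rewrite -[a *: x]addr0 ipZDl ip0l addr0. Qed.
Lemma ipNl x z : ip (- x) z = - ip x z.
Proof. by rewrite -scaleN1r ipZl mulN1r. Qed.
Lemma ipBl x y z : ip (x - y) z = ip x z - ip y z.
Proof. by rewrite ipDl ipNl. Qed.
Lemma ipDr x y z : ip z (x + y) = ip z x + ip z y.
Proof. by rewrite ipC ipDl rmorphD /= -!ipC. Qed.
Lemma ipZr a x z : ip z (a *: x) = conjc a * ip z x.
Proof. by rewrite ipC ipZl rmorphM /= -ipC. Qed.
Lemma ip0r z : ip z 0 = 0.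
Proof. by rewrite ipC ip0l conjc0. Qed.
Lemma ipNr x z : ip z (- x) = - ip z x.
Proof. by rewrite ipC ipNl rmorphN /= -ipC. Qed.
Lemma ipBr x y z : ip z (x - y) = ip z x - ip z y.
Proof. by rewrite ipDr ipNr. Qed.
Local Notation nrm := (ipnorm ip).
Lemma ipxx_Im x : complex.Im (ip x x) = 0.
Proof. by case: hip => _ _ /(_ x) []. Qed.
Lemma ipxx_Re x : 0 <= complex.Re (ip x x).
Proof. by case: hip => _ _ /(_ x) []. Qed.
Lemma nrm_ge0 x : 0 <= nrm x.
Proof. exact: sqrtr_ge0. Qed.
Lemma nrm_sq x : nrm x ^+ 2 = complex.Re (ip x x).
Proof. by rewrite sqr_sqrtr // ipxx_Re. Qed.
Lemma ipxx x : ip x x = (nrm x ^+ 2)%:C.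
Proof. by rewrite nrm_sq; case: (ip x x) (ipxx_Im x) => a b /= ->. Qed.
Lemma nrm0 {x} : nrm x = 0 -> x = 0.
Proof.
move=> h; case: hip => _ _ _; apply; rewrite ipxx h expr0n /=. by [].
Qed.
Lemma nrm_zero : nrm 0 = 0.
Proof. by rewrite /ipnorm ip0l /= sqrtr0. Qed.
Lemma ReipC x y : complex.Re (ip y x) = complex.Re (ip x y).
Proof. by rewrite ipC ReJ. Qed.
Lemma nrmZ (k : R) x : nrm (k%:C *: x) = `|k| * nrm x.
Proof.
rewrite /ipnorm ipZl ipZr conjc_real mulrA -rmorphM /= ReMC.
by rewrite sqrtrM ?sqr_ge0 // -expr2 sqrtr_sqr.
Qed.
Lemma nrm_i x : nrm ('i%C *: x) = nrm x.
Proof. by rewrite /ipnorm ipZl ipZr mulrA (_ : 'i%C * _ = 1) ?mul1r //; exact: i_conj_i. Qed.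
Lemma CSre x y : complex.Re (ip x y) <= nrm x * nrm y.
Proof.
have [hx|hx] := eqVneq (nrm x) 0.
  by rewrite (nrm0 hx) ip0l nrm_zero mul0r.
have [hy|hy] := eqVneq (nrm y) 0.
  by rewrite (nrm0 hy) ip0r nrm_zero mulr0.
have gx : 0 < nrm x by rewrite lt_neqAle eq_sym hx nrm_ge0.
have gy : 0 < nrm y by rewrite lt_neqAle eq_sym hy nrm_ge0.
have := ipxx_Re ((nrm y)%:C *: x - (nrm x)%:C *: y).
rewrite ipBl !ipBr !ipZl !ipZr !conjc_real !ReB !mulrA -!rmorphM /= !ReMC.
rewrite -!nrm_sq ReipC.
set r := complex.Re (ip y x) => h.
have h2 : 0 <= (nrm x * nrm y) * (nrm x * nrm y - r) by nra.
by rewrite pmulr_rge0 ?subr_ge0 ?mulr_gt0 in h2.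
Qed.
Lemma ip_ext a b : (forall v, ip v a = ip v b) -> a = b.
Proof.
move=> h; apply/eqP; rewrite -subr_eq0; apply/eqP.
case: hip => _ _ _; apply; by rewrite ipBr h subrr.
Qed.
Lemma nrmN x : nrm (- x) = nrm x.
Proof. by rewrite /ipnorm ipNl ipNr opprK. Qed.
Lemma adjL {F Fs} : is_adjoint ip F Fs -> forall a b, ip (Fs a) b = ip a (F b).
Proof. by move=> h a b; rewrite ipC -h -ipC. Qed.
Lemma adjZ {F Fs} : is_adjoint ip F Fs -> forall (k : R[i]) x, Fs (k *: x) = k *: Fs x.
Proof. by move=> h k x; apply: ip_ext => v; rewrite -h ipZr h ipZr. Qed.
Lemma adj0 {F Fs} : is_adjoint ip F Fs -> Fs 0 = 0.
Proof. by move=> h; have := adjZ h 0 0; rewrite !scale0r. Qed.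
Lemma adjN {F Fs} : is_adjoint ip F Fs ->
  is_adjoint ip (fun x => - F x) (fun x => - Fs x).
Proof. by move=> h a b; rewrite ipNl ipNr h. Qed.
Lemma cabs_normc (z : R[i]) : cabs z = Normc.normc z.
Proof. by case: z. Qed.
Lemma cabsD (a b : R[i]) : cabs (a + b) <= cabs a + cabs b.
Proof. rewrite !cabs_normc; exact: le_normcD. Qed.
Lemma cabs0 : cabs (0 : R[i]) = 0.
Proof. by rewrite /cabs /= expr0n /= addr0 sqrtr0. Qed.
Lemma absRe_ip u v : `|complex.Re (ip u v)| <= nrm u * nrm v.
Proof.
rewrite ler_norml CSre andbT lerNl -ReN -ipNl -(nrmN u); exact: CSre.
Qed.
Lemma absIm_ip u v : `|complex.Im (ip u v)| <= nrm u * nrm v.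
Proof.
rewrite ler_norml; apply/andP; split.
  rewrite lerNl -Re_iM -ipZl -(nrm_i u); exact: CSre.
rewrite -[ip u v]opprK -ipNl ImN -Re_iM -ipZl -(nrmN u) -(nrm_i (- u)); exact: CSre.
Qed.
Lemma cabs_ip u v : cabs (ip u v) <= 2 * (nrm u * nrm v).
Proof.
set a := complex.Re (ip u v); set b := complex.Im (ip u v).
have ha := absRe_ip u v; have hb := absIm_ip u v.
have : cabs (ip u v) <= `|a| + `|b|.
  rewrite /cabs -/a -/b -(ger0_norm (addr_ge0 (normr_ge0 a) (normr_ge0 b))).
  rewrite -sqrtr_sqr; apply: ler_wsqrtr.
  rewrite -(real_normK (num_real a)) -(real_normK (num_real b)).
  have := normr_ge0 a; have := normr_ge0 b; nra.
lra.
Qed.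

Lemma opn_props (f : V -> V) (c : R) :
  0 <= c -> (forall (k : R) x, f (k%:C *: x) = k%:C *: f x) ->
  (forall x, nrm (f x) <= c * nrm x) ->
  [/\ 0 <= opnorm ip f, opnorm ip f <= c &
      forall x, nrm (f x) <= opnorm ip f * nrm x].
Proof.
move=> c0 hZ hb.
have f0 : f 0 = 0.
  have := hZ 0 0; rewrite scaler0 => ->.
  by rewrite (_ : (0:R)%:C = 0) ?scale0r.
rewrite /opnorm; set E := [set _ | _ in _].
have hE : has_sup E.
  split; first by exists (nrm (f 0)); exists 0 => //=; rewrite nrm_zero ler01.
  exists c => _ [x hx <-]; apply: le_trans (hb x) _.
  by rewrite ler_piMr.
have ub := sup_upper_bound hE.
have E0 : E (nrm (f 0)) by exists 0 => //=; rewrite nrm_zero ler01.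
split.
- exact: le_trans (nrm_ge0 _) (ub _ E0).
- apply: ge_sup; first exact: hE.1.
  move=> _ [x hx <-]; apply: le_trans (hb x) _; by rewrite ler_piMr.
- move=> x; have [hn|hn] := eqVneq (nrm x) 0.
    by rewrite (nrm0 hn) f0 nrm_zero mulr0.
  have gn : 0 < nrm x by rewrite lt_neqAle eq_sym hn nrm_ge0.
  have : E (nrm (f ((nrm x)^-1%:C *: x))).
    exists ((nrm x)^-1%:C *: x) => //=.
    by rewrite nrmZ ger0_norm ?invr_ge0 ?nrm_ge0 // mulVf.
  move/ub; rewrite hZ nrmZ ger0_norm ?invr_ge0 ?nrm_ge0 // mulrC.
  by rewrite ler_pdivrMr.
Qed.

Lemma step2 (F G : V -> V) (al be : R) x u :
  0 <= al -> 0 <= be ->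
  (forall v, nrm (F v + G v) <= al * nrm v) ->
  (forall v, nrm (F v - G v) <= be * nrm v) ->
  nrm u ^+ 2 = complex.Re (ip (F x) (F u)) + complex.Re (ip (G x) (G u)) ->
  nrm u <= (al ^+ 2 + be ^+ 2) / 2 * nrm x.
Proof.
move=> a0 b0 hD hD' hu.
have e : ip (F x + G x) (F u + G u) + ip (F x - G x) (F u - G u) =
  (ip (F x) (F u) + ip (G x) (G u)) + (ip (F x) (F u) + ip (G x) (G u)).
  rewrite !ipDl !ipNl !ipDr !ipNr; ring.
have := congr1 (@complex.Re R) e; rewrite !ReD -hu.
have h1 := CSre (F x + G x) (F u + G u).
have h2 := CSre (F x - G x) (F u - G u).
have h3 := hD x; have h4 := hD u; have h5 := hD' x; have h6 := hD' u.
have := nrm_ge0 (F x + G x); have := nrm_ge0 (F u + G u).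
have := nrm_ge0 (F x - G x); have := nrm_ge0 (F u - G u).
have := nrm_ge0 x; have := nrm_ge0 u.
move=> gu gx g1 g2 g3 g4 eq.
have k1 : nrm (F x + G x) * nrm (F u + G u) <= al ^+ 2 * (nrm x) * (nrm u).
  have := ler_pM g4 g3 h3 h4; nra.
have k2 : nrm (F x - G x) * nrm (F u - G u) <= be ^+ 2 * (nrm x) * (nrm u).
  have := ler_pM g2 g1 h5 h6; nra.
have hh : 2 * (nrm u) ^+ 2 <= (al ^+ 2 + be ^+ 2) * (nrm x) * (nrm u) by lra.
have [z|z] := eqVneq (nrm u) 0.
  rewrite z; have := sqr_ge0 al; have := sqr_ge0 be; nra.
have gz : 0 < (nrm u) by rewrite lt_neqAle eq_sym z gu.
nra.
Qed.
End IP.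

Section Main.
Variable R : realType.
Variable V : lmodType R[i].
Variable ip : V -> V -> R[i].
Hypothesis hip : is_inner_product ip.
Variables (B C : {linear V -> V}) (Bs Cs : V -> V).
Variables (MB MC : R).
Hypothesis hMB : forall x, ipnorm ip (B x) <= MB * ipnorm ip x.
Hypothesis hMC : forall x, ipnorm ip (C x) <= MC * ipnorm ip x.
Hypothesis hBs : is_adjoint ip B Bs.
Hypothesis hCs : is_adjoint ip C Cs.
Local Notation nrm := (ipnorm ip).
Local Notation nsum := (ipnorm (ip_sum ip)).
Local Notation T := (opmat (fun=> 0) B C (fun=> 0)).
Local Notation w := (numrad (ip_sum ip) T).
Definition Tq z := ip_sum ip (T z) z.

Lemma Tq_eq z : Tq z = ip (B z.2) z.1 + ip (C z.1) z.2.
Proof. by rewrite /Tq /ip_sum /opmat /= add0r addr0. Qed.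

Lemma nsum_def z : nsum z = Num.sqrt (nrm z.1 ^+ 2 + nrm z.2 ^+ 2).
Proof. by rewrite /ipnorm /ip_sum ReD !sqr_sqrtr ?ipxx_Re. Qed.

Lemma nsum_sq z : nsum z ^+ 2 = nrm z.1 ^+ 2 + nrm z.2 ^+ 2.
Proof. by rewrite nsum_def sqr_sqrtr // addr_ge0 ?sqr_ge0. Qed.

Lemma hMB' x : nrm (B x) <= `|MB| * nrm x.
Proof. have := hMB x; have := nrm_ge0 ip x; have := ler_norm MB; nra. Qed.
Lemma hMC' x : nrm (C x) <= `|MC| * nrm x.
Proof. have := hMC x; have := nrm_ge0 ip x; have := ler_norm MC; nra. Qed.

Lemma numset_hs : [set cabs (ip_sum ip (T x) x) | x in [set x | nsum x = 1]] !=set0 ->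
  has_sup [set cabs (ip_sum ip (T x) x) | x in [set x | nsum x = 1]].
Proof.
move=> ne; split => //.
exists (2 * `|MB| + 2 * `|MC|) => _ [z hz <-].
rewrite -/(Tq z) Tq_eq.
have hs := nsum_sq z; rewrite hz expr1n in hs.
have g1 := nrm_ge0 ip z.1; have g2 := nrm_ge0 ip z.2.
have l1 : nrm z.1 <= 1 by nra.
have l2 : nrm z.2 <= 1 by nra.
apply: le_trans (cabsD _ _) _.
have c1 := cabs_ip hip (B z.2) z.1; have c2 := cabs_ip hip (C z.1) z.2.
have b1 := hMB' z.2; have b2 := hMC' z.1.
have := nrm_ge0 ip (B z.2); have := nrm_ge0 ip (C z.1).
have := normr_ge0 MB; have := normr_ge0 MC.
nra.
Qed.

Lemma numset_ub z : nsum z = 1 -> cabs (Tq z) <= w.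
Proof.
move=> hz; apply: sup_upper_bound; last by exists z.
by apply: numset_hs; exists (cabs (Tq z)); exists z.
Qed.

Lemma w_ge0 : 0 <= w.
Proof.
case: (pselect (exists z, nsum z = 1)) => [[z hz]|nz].
  exact: le_trans (cabs_ge0 _) (numset_ub hz).
rewrite /numrad (_ : [set _ | _ in _] = set0) ?sup0 //.
apply/seteqP; split=> [e [z hz _]|]; last exact: sub0set.
by exfalso; apply: nz; exists z.
Qed.

Lemma Kbound z : cabs (Tq z) <= w * nsum z ^+ 2.
Proof.
have [hn|hn] := eqVneq (nsum z) 0.
  have hs := nsum_sq z; rewrite hn expr0n /= in hs.
  have g1 := nrm_ge0 ip z.1; have g2 := nrm_ge0 ip z.2.
  have h1 : nrm z.1 = 0 by nra.
  have h2 : nrm z.2 = 0 by nra.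
  rewrite Tq_eq (nrm0 hip h1) (nrm0 hip h2) !linear0 !(ip0r hip) addr0 cabs0 hn.
  by rewrite expr0n /= mulr0.
have gn : 0 < nsum z by rewrite lt_neqAle eq_sym hn sqrtr_ge0.
set k := (nsum z)^-1.
set z' := (k%:C *: z.1, k%:C *: z.2).
have hz' : nsum z' = 1.
  rewrite nsum_def /= !(nrmZ hip) !exprMn -mulrDr -nsum_sq.
  by rewrite /k ger0_norm ?invr_ge0 ?(ltW gn) // exprVn mulVf ?sqrtr1 // expf_neq0.
have := numset_ub hz'.
rewrite !Tq_eq /= !linearZ /= !(ipZl hip) !(ipZr hip) !conjc_real !mulrA -!rmorphM /=.
rewrite -mulrDr cabsMC ger0_norm; last by rewrite mulr_ge0 // invr_ge0 ltW.
move=> h.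
have e : nsum z ^+ 2 * (k * k) = 1.
  by rewrite -expr2 -exprMn /k mulfV // expr1n.
have := ler_wpM2l (sqr_ge0 (nsum z)) h.
by rewrite mulrA e mul1r -mulrA -expr2 mulrC.
Qed.
Lemma S1 x y : complex.Re (ip (B x + Cs x) y) <= w * (nrm y ^+ 2 + nrm x ^+ 2).
Proof.
have := Kbound (y, x); rewrite Tq_eq nsum_sq /= => h.
rewrite (ipDl hip) ReD (ReipC hip y (Cs x)) -hCs -ReD.
exact: le_trans (Re_le_cabs _) h.
Qed.

Lemma S1' x y : complex.Re (ip (B x - Cs x) y) <= w * (nrm y ^+ 2 + nrm x ^+ 2).
Proof.
have := Kbound ('i%C *: y, x); rewrite Tq_eq nsum_sq /= (nrm_i hip) => h.
rewrite (ipDl hip) (ipNl hip) ReD ReN (ReipC hip y (Cs x)) -hCs -ReN -ReD.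
move: h; rewrite !linearZ /= (ipZr hip) (ipZl hip).
set a := ip (B x) y; set c := ip (C y) x => h.
have e : a - c = 'i%C * ('i%C^* * a + 'i%C * c).
  rewrite mulrDr !mulrA (_ : 'i%C * _ = 1); last exact: i_conj_i.
  by rewrite mul1r -expr2 sqr_i mulN1r.
rewrite e Re_iM; exact: le_trans (Im_le_cabs _) h.
Qed.

Lemma nb (u x : V) : (forall y, complex.Re (ip u y) <= w * (nrm y ^+ 2 + nrm x ^+ 2)) ->
  (nrm x = 0 -> u = 0) -> nrm u <= 2 * w * nrm x.
Proof.
move=> h h0.
have w0 := w_ge0.
have [r0|r0] := eqVneq (nrm u) 0.
  by rewrite r0 !mulr_ge0 // nrm_ge0.
have [n0|n0] := eqVneq (nrm x) 0.
  by move: r0; rewrite (h0 n0) (nrm_zero hip) eqxx.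
have gr : 0 < nrm u by rewrite lt_neqAle eq_sym r0 nrm_ge0.
have gn : 0 < nrm x by rewrite lt_neqAle eq_sym n0 nrm_ge0.
have := h ((nrm x / nrm u)%:C *: u).
rewrite (ipZr hip) conjc_real ReMC -(nrm_sq hip) (nrmZ hip) ger0_norm; last first.
  by rewrite divr_ge0 // ltW.
have e1 : nrm x / nrm u * nrm u = nrm x by rewrite divfK.
rewrite e1 expr2 mulrA e1 => hh.
nra.
Qed.

Lemma Dbound x : nrm (B x + Cs x) <= 2 * w * nrm x.
Proof.
apply: nb (S1 x) _ => h.
by rewrite (nrm0 hip h) linear0 (adj0 hip hCs) addr0.
Qed.

Lemma D'bound x : nrm (B x - Cs x) <= 2 * w * nrm x.
Proof.
apply: nb (S1' x) _ => h.
by rewrite (nrm0 hip h) linear0 (adj0 hip hCs) subr0.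
Qed.

Lemma main_ineq :
  (numrad (ip_sum ip) (opmat (fun=> 0) B C (fun=> 0))) ^+ 2 >=
    4^-1 * Num.max (opnorm ip (fun x => Bs (B x) + C (Cs x)))
                   (opnorm ip (fun x => B (Bs x) + Cs (C x)))
  + 8^-1 * `| opnorm ip (fun x => B x + Cs x) ^+ 2
              - opnorm ip (fun x => B x - Cs x) ^+ 2 |.
Proof.
have w0 := w_ge0.
have c0 : 0 <= 2 * w by rewrite mulr_ge0.
have Za (k : R) x : B (k%:C *: x) + Cs (k%:C *: x) = k%:C *: (B x + Cs x).
  by rewrite linearZ (adjZ hip hCs) scalerDr.
have [a0 aw ha] := opn_props hip (f := fun x => B x + Cs x) c0 Za Dbound.
have Zb (k : R) x : B (k%:C *: x) - Cs (k%:C *: x) = k%:C *: (B x - Cs x).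
  by rewrite linearZ (adjZ hip hCs) scalerBr.
have [b0 bw hb] := opn_props hip (f := fun x => B x - Cs x) c0 Zb D'bound.
set a := opnorm ip (fun x => B x + Cs x) in a0 aw ha *.
set b := opnorm ip (fun x => B x - Cs x) in b0 bw hb *.
have cab : 0 <= (a ^+ 2 + b ^+ 2) / 2.
  by rewrite divr_ge0 // addr_ge0 // sqr_ge0.
have Pb x : nrm (Bs (B x) + C (Cs x)) <= (a ^+ 2 + b ^+ 2) / 2 * nrm x.
  apply: (step2 hip (F := B) (G := Cs)) a0 b0 ha hb _.
  rewrite (nrm_sq hip) (ipDl hip (Bs (B x)) (C (Cs x))) (adjL hip hBs) hCs ReD //.
have Eb v : nrm (Bs v + C v) <= a * nrm v.
  have := nrm_sq hip (Bs v + C v).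
  rewrite (ipDl hip (Bs v) (C v)) (adjL hip hBs) hCs -(ipDr hip) => e.
  have := CSre hip v (B (Bs v + C v) + Cs (Bs v + C v)).
  rewrite -e => h1; have h2 := ha (Bs v + C v).
  have := nrm_ge0 ip v; have := nrm_ge0 ip (Bs v + C v).
  have := nrm_ge0 ip (B (Bs v + C v) + Cs (Bs v + C v)).
  move=> g1 g2 g3.
  have h3 : nrm (Bs v + C v) ^+ 2 <= a * nrm (Bs v + C v) * nrm v by nra.
  have [z|z] := eqVneq (nrm (Bs v + C v)) 0.
    by rewrite z mulr_ge0.
  have gz : 0 < nrm (Bs v + C v) by rewrite lt_neqAle eq_sym z g2.
  nra.
have E'b v : nrm (Bs v - C v) <= b * nrm v.
  have := nrm_sq hip (Bs v - C v).
  rewrite (ipDl hip (Bs v) (- C v)) (ipNl hip) (adjL hip hBs) hCs -(ipBr hip) => e.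
  have := CSre hip v (B (Bs v - C v) - Cs (Bs v - C v)).
  rewrite -e => h1; have h2 := hb (Bs v - C v).
  have := nrm_ge0 ip v; have := nrm_ge0 ip (Bs v - C v).
  have := nrm_ge0 ip (B (Bs v - C v) - Cs (Bs v - C v)).
  move=> g1 g2 g3.
  have h3 : nrm (Bs v - C v) ^+ 2 <= b * nrm (Bs v - C v) * nrm v by nra.
  have [z|z] := eqVneq (nrm (Bs v - C v)) 0.
    by rewrite z mulr_ge0.
  have gz : 0 < nrm (Bs v - C v) by rewrite lt_neqAle eq_sym z g2.
  nra.
have Qb x : nrm (B (Bs x) + Cs (C x)) <= (a ^+ 2 + b ^+ 2) / 2 * nrm x.
  apply: (step2 hip (F := Bs) (G := C)) a0 b0 Eb E'b _.
  rewrite (nrm_sq hip) (ipDl hip (B (Bs x)) (Cs (C x))) hBs (adjL hip hCs) ReD //.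
have ZP (k : R) x : Bs (B (k%:C *: x)) + C (Cs (k%:C *: x)) = k%:C *: (Bs (B x) + C (Cs x)).
  by rewrite linearZ (adjZ hip hBs) (adjZ hip hCs) linearZ scalerDr.
have [_ hP _] := opn_props hip (f := fun x => Bs (B x) + C (Cs x)) cab ZP Pb.
have ZQ (k : R) x : B (Bs (k%:C *: x)) + Cs (C (k%:C *: x)) = k%:C *: (B (Bs x) + Cs (C x)).
  by rewrite (adjZ hip hBs) linearZ linearZ (adjZ hip hCs) scalerDr.
have [_ hQ _] := opn_props hip (f := fun x => B (Bs x) + Cs (C x)) cab ZQ Qb.
have hm : Num.max (opnorm ip (fun x : V => Bs (B x) + C (Cs x)))
    (opnorm ip (fun x : V => B (Bs x) + Cs (C x))) <= (a ^+ 2 + b ^+ 2) / 2.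
  by rewrite ge_max hP hQ.
move: hm; set M := Num.max _ _ => hm.
have ha2 : a ^+ 2 <= 4 * w ^+ 2 by nra.
have hb2 : b ^+ 2 <= 4 * w ^+ 2 by nra.
have [hab|hab] := lerP (a ^+ 2) (b ^+ 2).
  lra.
lra.
Qed.
End Main.

Unset Implicit Arguments.
Local Close Scope complex_scope.
Local Close Scope classical_set_scope.

Theorem mainTheorem4 (R : realType) (V : lmodType R[i]) (ip : V -> V -> R[i])
    (HV : is_hilbert ip) (B C : {linear V -> V}) (Bs Cs : V -> V)
    (hB : bounded_op ip B) (hC : bounded_op ip C)
    (hBs : is_adjoint ip B Bs) (hCs : is_adjoint ip C Cs) :
  (numrad (ip_sum ip) (opmat (fun=> 0) B C (fun=> 0))) ^+ 2 >=
    4^-1 * Num.max (opnorm ip (fun x => Bs (B x) + C (Cs x)))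
                   (opnorm ip (fun x => B (Bs x) + Cs (C x)))
  + 8^-1 * `| opnorm ip (fun x => B x + Cs x) ^+ 2
              - opnorm ip (fun x => B x - Cs x) ^+ 2 |.
Proof.
case: hB => MB hMB; case: hC => MC hMC.
exact: (main_ineq HV.1 hMB hMC hBs hCs).
Qed.
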